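(* Let $(V,[\cdot,\cdot]_V,\langle\cdot,\cdot\rangle)$ be a quadratic Lie algebra whose adjoint map $\mathrm{ad}:V\to\mathfrak{gl}(V)$ is injective, and let $\mathcal V$ be the string-type Lie 2-algebra: the 2-vector space of the complex $\mathbb R\xrightarrow{0}V$ (objects $V$, morphisms $V\oplus\mathbb R$), bracket $[(u,r),(v,r')]_{\mathcal V}=([u,v]_V,0)$, Jacobiator $J_{u,v,w}=([[u,v]_V,w]_V,\langle[u,v]_V,w\rangle)$. Identify $\mathrm{End}^0_{\mathrm d}(\mathcal V)=\mathfrak{gl}(V)\oplus\mathbb R$ and $\mathrm{End}^1(\mathcal V)=\mathrm{Hom}(V,\mathbb R)$, fix a linear complement $\mathrm{Im}(\mathrm{ad})^\perp$ of $\mathrm{Im}(\mathrm{ad})$ in $\mathfrak{gl}(V)$, and define $\alpha:\mathfrak{gl}(V)\oplus\mathbb R\to\mathrm{Hom}(V,\mathbb R)$ by $\alpha(\mathrm{ad}_u+X+r)(v)=\langle u,v\rangle$ for $u,v\in V$, $X\in\mathrm{Im}(\mathrm{ad})^\perp$, $r\in\mathbb R$. Let $\mu=(\mathrm{Id},\mathrm{Id},\mu_2)$ with $\mu_2(A,B)=([A,B],d\alpha(A,B))$, $d\alpha(A,B)=[A,\alpha(B)]-[B,\alpha(A)]-\alpha([A,B])$. Then $\mu_2(\mathrm{ad}_u,\mathrm{ad}_v)(w)=J_{u,v,w}$ for all $u,v,w\in V$, and the graph $\mathfrak G_{\mathrm{ad}_{\mathcal V}}$ of the linear functor $\mathrm{ad}_{\mathcal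 V}:\mathcal V\to\mathfrak{gl}(\mathcal V)$, $\mathrm{ad}_{\mathcal V}\xi(\eta)=[\xi,\eta]_{\mathcal V}$, is a Dirac structure of the $\mu$-twisted omni-Lie 2-algebra $\mathfrak{gl}(\mathcal V)\oplus_\mu\mathcal V$ whose associated Lie 2-algebra $(\mathcal V,[\cdot,\cdot]_{\mu,\mathrm{ad}_{\mathcal V}},J)$, with $[\xi,\eta]_{\mu,\mathrm{ad}_{\mathcal V}}=\mu_1(\mathrm{ad}_{\mathcal V}\xi)(\eta)$ and $J_{u,v,w}=\mu_2(\mathrm{ad}_{\mathcal V}u,\mathrm{ad}_{\mathcal V}v)(w)$, is exactly the string-type Lie 2-algebra $\mathcal V$.
   Context: All vector spaces are finite-dimensional over $\mathbb R$. A quadratic Lie algebra is a Lie algebra with a nondegenerate symmetric bilinear form invariant under the adjoint action. For a 2-term complex $V_1\xrightarrow{\mathrm d}V_0$, the 2-vector space $\mathbb V$ has objects $V_0$, morphisms $V_0\oplus V_1$ ($u+m$), $s(u+m)=u$, $t(u+m)=u+\mathrm dm$. $\mathrm{End}^0_{\mathrm d}(\mathbb V)=\{A=(A_0,A_1):A_0\mathrm d=\mathrm dA_1\}$, $\mathrm{End}^1(\mathbb V)=\mathrm{Hom}(V_0,V_1)$, $\delta\phi=(\mathrm d\phi,\phi\mathrm d)$; brackets $[A,B]$ componentwise commutator, $[A,\phi]=-[\phi,A]=A_1\phi-\phi A_0$, $[\phi,\psi]_\delta=\phi\mathrm d\psi-\psi\mathrm d\phi$. The strict Lie 2-algebra $\mathfrak{gl}(\mathbb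 V)$ has objects $\mathrm{End}^0_{\mathrm d}(\mathbb V)$, morphisms $A+\phi$, $s(A+\phi)=A$, $t(A+\phi)=A+\delta\phi$, bracket $[A+\phi,B+\psi]=[A,B]+[\phi,\psi]_\delta+[A,\psi]+[\phi,B]$, and acts on $\mathbb V$ by $A(u)=A_0u$, $(A+\phi)(u+m)=A_0u+(A_1m+\phi(u+\mathrm dm))$. A Lie 2-algebra is a 2-vector space with a skew-symmetric bilinear functor and a skew-symmetric trilinear natural isomorphism $J_{x,y,z}:[[x,y],z]\to[x,[y,z]]+[[x,z],y]$ satisfying the Jacobiator identity; Lie 2-algebra (iso)morphisms $(\mu_0,\mu_1,\mu_2)$ consist of a linear functor and a skew-symmetric bilinear natural transformation $\mu_2(u,v):\mu_0[u,v]\to[\mu_0u,\mu_0v]$ compatible with the Jacobiators. The $\mu$-twisted omni-Lie 2-algebra $\mathfrak{gl}(\mathbb V)\oplus_\mu\mathbb V$ is $\mathfrak{gl}(\mathbb V)\oplus\mathbb V$ with bracket $[\![A+\phi+u+m,B+\psi+v+n]\!]_\mu=[A+\phi,B+\psi]+\tfrac12(\mu_1(A+\phi)(v+n)-\mu_1(B+\psi)(u+m))$ and pairing $\langle A+\phi+u+m,B+\psi+v+n\rangle_\mu=\tfrac12(\mu_1(A+\phi)(v+n)+\mu_1(B+\psi)(u+m))$ (on objects, same with $\mu_0$). A Dirac structure is a 2-sub-vector space $L$ with $L=L^\perp$ (w.r.t. $\langle\cdot,\cdot\rangle_\mu$) closed under $[\![\cdot,\cdot]\!]_\mu$. *)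

(* Defs.v *)
(* Real vector spaces are modelled by column vectors over an
   arbitrary real field R (generalising R = the reals); linear maps by matrices. *)
From HB Require Import structures.
From mathcomp Require Import all_boot all_order all_algebra.
Set Implicit Arguments. Unset Strict Implicit. Unset Printing Implicit Defensive.
Import Order.TTheory GRing.Theory Num.Theory.
Local Open Scope ring_scope.

Section TwoVect.
Variable R : realFieldType.

(* 2-vector space VV: objects 'cV_p, morphisms u+m = (u,m) : 'cV_p * 'cV_q *)
Definition srcV p q (e : 'cV[R]_p * 'cV[R]_q) : 'cV[R]_p := e.1.
Definition tgtV p q (d : 'M[R]_(p,q)) (e : 'cV[R]_p * 'cV[R]_q) : 'cV[R]_p :=
  e.1 + d *m e.2.
Definition idV p q (u : 'cV[R]_p) : 'cV[R]_p * 'cV[R]_q := (u, 0).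

Definition End0 p q := ('M[R]_p * 'M[R]_q)%type.
Definition End1 p q := 'M[R]_(q,p).
Definition inEnd0 p q (d : 'M[R]_(p,q)) (A : End0 p q) : Prop :=
  A.1 *m d = d *m A.2.
Definition deltaE p q (d : 'M[R]_(p,q)) (phi : End1 p q) : End0 p q :=
  (d *m phi, phi *m d).

(* gl(VV): objects End0, morphisms A+phi = (A,phi) *)
Definition glMor p q := (End0 p q * End1 p q)%type.
Definition glsrc p q (X : glMor p q) : End0 p q := X.1.
Definition gltgt p q (d : 'M[R]_(p,q)) (X : glMor p q) : End0 p q :=
  (X.1.1 + (deltaE d X.2).1, X.1.2 + (deltaE d X.2).2).
Definition glid p q (A : End0 p q) : glMor p q := (A, 0).
Definition glbrO p q (A B : End0 p q) : End0 p q :=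
  (A.1 *m B.1 - B.1 *m A.1, A.2 *m B.2 - B.2 *m A.2).
Definition glbrA p q (A : End0 p q) (phi : End1 p q) : End1 p q :=
  A.2 *m phi - phi *m A.1.
Definition glbrD p q (d : 'M[R]_(p,q)) (phi psi : End1 p q) : End1 p q :=
  phi *m d *m psi - psi *m d *m phi.
Definition glbrM p q (d : 'M[R]_(p,q)) (X Y : glMor p q) : glMor p q :=
  (glbrO X.1 Y.1, glbrD d X.2 Y.2 + glbrA X.1 Y.2 - glbrA Y.1 X.2).
Definition actO p q (A : End0 p q) (u : 'cV[R]_p) : 'cV[R]_p := A.1 *m u.
Definition actM p q (d : 'M[R]_(p,q)) (X : glMor p q)
  (e : 'cV[R]_p * 'cV[R]_q) : 'cV[R]_p * 'cV[R]_q :=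
  (X.1.1 *m e.1, X.1.2 *m e.2 + X.2 *m (e.1 + d *m e.2)).

(* objects: End0 * V0 ; morphisms: glMor * (V0 * V1).  mu0, mu1 is the linear
   functor part of mu; the bracket and pairing only involve mu0, mu1. *)
Definition omObj p q := (End0 p q * 'cV[R]_p)%type.
Definition omMor p q := (glMor p q * ('cV[R]_p * 'cV[R]_q))%type.

Definition half2 p q (e : 'cV[R]_p * 'cV[R]_q) : 'cV[R]_p * 'cV[R]_q :=
  (2^-1 *: e.1, 2^-1 *: e.2).
Definition addV p q (e f : 'cV[R]_p * 'cV[R]_q) : 'cV[R]_p * 'cV[R]_q :=
  (e.1 + f.1, e.2 + f.2).
Definition subV p q (e f : 'cV[R]_p * 'cV[R]_q) : 'cV[R]_p * 'cV[R]_q :=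
  (e.1 - f.1, e.2 - f.2).

Definition ombrO p q (mu0 : End0 p q -> End0 p q) (x y : omObj p q) : omObj p q :=
  (glbrO x.1 y.1, 2^-1 *: (actO (mu0 x.1) y.2 - actO (mu0 y.1) x.2)).
Definition ombrM p q (d : 'M[R]_(p,q)) (mu1 : glMor p q -> glMor p q)
  (e f : omMor p q) : omMor p q :=
  (glbrM d e.1 f.1, half2 (subV (actM d (mu1 e.1) f.2) (actM d (mu1 f.1) e.2))).
Definition ompairO p q (mu0 : End0 p q -> End0 p q) (x y : omObj p q) : 'cV[R]_p :=
  2^-1 *: (actO (mu0 x.1) y.2 + actO (mu0 y.1) x.2).
Definition ompairM p q (d : 'M[R]_(p,q)) (mu1 : glMor p q -> glMor p q)
  (e f : omMor p q) : 'cV[R]_p * 'cV[R]_q :=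
  half2 (addV (actM d (mu1 e.1) f.2) (actM d (mu1 f.1) e.2)).

Definition omsrc p q (e : omMor p q) : omObj p q := (glsrc e.1, srcV e.2).
Definition omtgt p q (d : 'M[R]_(p,q)) (e : omMor p q) : omObj p q :=
  (gltgt d e.1, tgtV d e.2).
Definition omid p q (x : omObj p q) : omMor p q := (glid x.1, idV q x.2).

Definition lcO p q (a : R) (x y : omObj p q) : omObj p q :=
  ((a *: x.1.1 + y.1.1, a *: x.1.2 + y.1.2), a *: x.2 + y.2).
Definition lcM p q (a : R) (e f : omMor p q) : omMor p q :=
  (((a *: e.1.1.1 + f.1.1.1, a *: e.1.1.2 + f.1.1.2), a *: e.1.2 + f.1.2),
   (a *: e.2.1 + f.2.1, a *: e.2.2 + f.2.2)).
Definition zeroO p q : omObj p q := ((0, 0), 0).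
Definition zeroM p q : omMor p q := (((0, 0), 0), (0, 0)).

Definition sub2vect p q (d : 'M[R]_(p,q)) (LO : omObj p q -> Prop)
  (LM : omMor p q -> Prop) : Prop :=
  [/\ (forall x, LO x -> inEnd0 d x.1),
      LO (zeroO p q) /\ (forall a x y, LO x -> LO y -> LO (lcO a x y)),
      LM (zeroM p q) /\ (forall a e f, LM e -> LM f -> LM (lcM a e f)),
      (forall e, LM e -> LO (omsrc e) /\ LO (omtgt d e)) &
      (forall x, LO x -> LM (omid x))].

Definition perpO p q (d : 'M[R]_(p,q)) (mu0 : End0 p q -> End0 p q)
  (mu1 : glMor p q -> glMor p q) (LO : omObj p q -> Prop)
  (LM : omMor p q -> Prop) (x : omObj p q) : Prop :=
  inEnd0 d x.1 /\
  (forall y, LO y -> ompairO mu0 x y = 0) /\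
  (forall f, LM f -> ompairM d mu1 (omid x) f = (0, 0)).
Definition perpM p q (d : 'M[R]_(p,q)) (mu1 : glMor p q -> glMor p q)
  (LM : omMor p q -> Prop) (e : omMor p q) : Prop :=
  inEnd0 d e.1.1 /\ (forall f, LM f -> ompairM d mu1 e f = (0, 0)).

Definition Dirac p q (d : 'M[R]_(p,q)) (mu0 : End0 p q -> End0 p q)
  (mu1 : glMor p q -> glMor p q) (LO : omObj p q -> Prop)
  (LM : omMor p q -> Prop) : Prop :=
  [/\ sub2vect d LO LM,
      (forall x, LO x <-> perpO d mu0 mu1 LO LM x),
      (forall e, LM e <-> perpM d mu1 LM e),
      (forall x y, LO x -> LO y -> LO (ombrO mu0 x y)) &
      (forall e f, LM e -> LM f -> LM (ombrM d mu1 e f))].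

Definition adm n (br : 'cV[R]_n -> 'cV[R]_n -> 'cV[R]_n) (u : 'cV[R]_n) : 'M[R]_n :=
  \matrix_(i, j) (br u (delta_mx j 0)) i 0.
Definition qform n (G : 'M[R]_n) (u v : 'cV[R]_n) : 'M[R]_1 := u^T *m G *m v.

Definition quadLie n (br : 'cV[R]_n -> 'cV[R]_n -> 'cV[R]_n) (G : 'M[R]_n) : Prop :=
  [/\ (forall (a : R) u u' v, br (a *: u + u') v = a *: br u v + br u' v),
      (forall u v, br u v = - br v u),
      (forall u v w, br u (br v w) = br (br u v) w + br v (br u w)),
      G^T = G /\ G \in unitmx &
      (forall u v w, qform G (br w u) v + qform G u (br w v) = 0)].

Definition dS n : 'M[R]_(n,1) := 0.
Definition strbrO n (br : 'cV[R]_n -> 'cV[R]_n -> 'cV[R]_n) (u v : 'cV[R]_n) := br u v.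
Definition strbrM n (br : 'cV[R]_n -> 'cV[R]_n -> 'cV[R]_n)
  (e f : 'cV[R]_n * 'cV[R]_1) : 'cV[R]_n * 'cV[R]_1 := (br e.1 f.1, 0).
Definition strJ n (br : 'cV[R]_n -> 'cV[R]_n -> 'cV[R]_n) (G : 'M[R]_n)
  (u v w : 'cV[R]_n) : 'cV[R]_n * 'cV[R]_1 := (br (br u v) w, qform G (br u v) w).

Definition adV0 n br (u : 'cV[R]_n) : End0 n 1 := (adm br u, 0).
Definition adV1 n br (e : 'cV[R]_n * 'cV[R]_1) : glMor n 1 := (adV0 br e.1, 0).

Definition graphO n br (x : omObj n 1) : Prop := x.1 = adV0 br x.2.
Definition graphM n br (e : omMor n 1) : Prop := e.1 = adV1 br e.2.

Definition dalpha n (alpha : End0 n 1 -> End1 n 1) (A B : End0 n 1) : End1 n 1 :=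
  glbrA A (alpha B) - glbrA B (alpha A) - alpha (glbrO A B).
Definition mu2 n (alpha : End0 n 1 -> End1 n 1) (A B : End0 n 1) : glMor n 1 :=
  (glbrO A B, dalpha alpha A B).

End TwoVect.

(* Main.v *)
Require Import Defs.
From HB Require Import structures.
From mathcomp Require Import all_boot all_order all_algebra.
Import Order.TTheory GRing.Theory Num.Theory.
Local Open Scope ring_scope.

Section Aux.
Variables (R : realFieldType) (n : nat) (br : 'cV[R]_n -> 'cV[R]_n -> 'cV[R]_n).
Hypothesis lin : forall (a : R) u u' v, br (a *: u + u') v = a *: br u v + br u' v.
Hypothesis anti : forall u v, br u v = - br v u.

Lemma br0l v : br 0 v = 0.
Proof.
have H := lin 1 0 0 v; rewrite !scale1r addr0 in H.
have: br 0 v + br 0 v - br 0 v = br 0 v - br 0 v by rewrite -H.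
by rewrite addrK subrr.
Qed.

Lemma br0r u : br u 0 = 0.
Proof. by rewrite anti br0l oppr0. Qed.

Lemma linR a u v v' : br u (a *: v + v') = a *: br u v + br u v'.
Proof. by rewrite [LHS]anti lin (anti u v) (anti u v') opprD scalerN. Qed.

Lemma brsum (u : 'cV[R]_n) (F : 'I_n -> 'cV[R]_n) :
  br u (\sum_(j < n) F j) = \sum_(j < n) br u (F j).
Proof.
apply: (big_morph (br u)); last exact: br0r.
by move=> x y; rewrite -[x in LHS]scale1r linR scale1r.
Qed.

Lemma mx_ext m (A B : 'M[R]_(m, n)) : (forall v : 'cV[R]_n, A *m v = B *m v) -> A = B.
Proof.
move=> H; apply/matrixP => i j.
have := H (delta_mx j 0); rewrite -!colE => /matrixP /(_ i 0).
by rewrite !mxE.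
Qed.

Lemma adm_mul u v : adm br u *m v = br u v.
Proof.
have Hv : v = \sum_(j < n) v j 0 *: delta_mx j 0.
  apply/matrixP => i k; rewrite summxE (bigD1 i) //= !mxE big1 ?addr0.
    by rewrite !eqxx (ord1 k) mulr1.
  by move=> j /negbTE Hj; rewrite !mxE eq_sym Hj mulr0.
rewrite {2}Hv brsum.
apply/matrixP => i k; rewrite !mxE summxE; apply: eq_bigr => j _.
rewrite -[v j 0 *: _]addr0 linR br0r addr0 !mxE (ord1 k) mulrC.
by [].
Qed.

Lemma adm_lin a u u' : adm br (a *: u + u') = a *: adm br u + adm br u'.
Proof. by apply/matrixP => i j; rewrite !mxE lin !mxE. Qed.

Hypothesis jac : forall u v w, br u (br v w) = br (br u v) w + br v (br u w).

Lemma adm_comm u v :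
  adm br u *m adm br v - adm br v *m adm br u = adm br (br u v).
Proof.
apply: mx_ext => w.
by rewrite mulmxBl -!mulmxA !adm_mul jac addrK.
Qed.

End Aux.

Theorem mainTheorem17 (R : realFieldType) (n : nat)
  (br : 'cV[R]_n -> 'cV[R]_n -> 'cV[R]_n) (G : 'M[R]_n)
  (C : 'M[R]_n -> Prop) (alpha : End0 R n 1 -> End1 R n 1) :
  quadLie br G ->
  injective (adm br) ->
  (* C = Im(ad)^perp : a linear complement of Im(ad) in gl(V) *)
  C 0 -> (forall (a : R) X Y, C X -> C Y -> C (a *: X + Y)) ->
  (forall u, C (adm br u) -> adm br u = 0) ->
  (forall A, exists u X, C X /\ A = adm br u + X) ->
  (* alpha (ad_u + X + r)(v) = <u,v> *)
  (forall u X (r : 'M[R]_1) v, C X -> alpha (adm br u + X, r) *m v = qform G u v) ->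
  [/\ (forall u v w,
         actM (dS R n) (mu2 alpha (adV0 br u) (adV0 br v)) (w, 0) = strJ br G u v w),
      Dirac (dS R n) id id (graphO br) (graphM br),
      (forall u v, actO (id (adV0 br u)) v = strbrO br u v) &
      (forall e f, actM (dS R n) (id (adV1 br e)) f = strbrM br e f)].
Proof.
move=> [lin anti jac _ inv] _ C0 _ _ _ halpha.
have am := @adm_mul R n br lin anti; have ac := @adm_comm R n br lin anti jac.
have Ha : forall u r v, alpha (adm br u, r) *m v = qform G u v.
  by move=> u r v; have := halpha u 0 r v C0; rewrite addr0.
have qN : forall x w, qform G (- x) w = - qform G x w.
  by move=> x w; rewrite /qform linearN /= !mulNmx.
split.
- move=> u v w; rewrite /actM /mu2 /strJ /= mulmx0 add0r mulmx0 addr0.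
  congr (_, _); first by rewrite ac am.
  rewrite /dalpha /glbrA /glbrO /= !mul0mx !sub0r oppr0 ac /adV0.
  rewrite !mulmxBl !mulNmx -!mulmxA !am.
  set T1 := (X in - X - _ - _ = _); set T2 := (X in _ - - X - _ = _).
  set T3 := (X in _ - _ - X = _).
  have -> : T1 = qform G v (br u w) by exact: Ha.
  have -> : T2 = qform G u (br v w) by exact: Ha.
  have -> : T3 = qform G (br u v) w by exact: Ha.
  have E1 : qform G v (br u w) = - qform G (br u v) w.
    by apply/eqP; rewrite -addr_eq0 addrC inv.
  have E2 : qform G u (br v w) = qform G (br u v) w.
    have := inv u w v; rewrite anti qN => /eqP; rewrite addrC addr_eq0 opprK.
    by move/eqP.
  by rewrite E1 E2 opprK addrK.
- have inE : forall A : End0 R n 1, inEnd0 (dS R n) A.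
    by move=> A; rewrite /inEnd0 /dS mulmx0 mul0mx.
  have adm0 : adm br 0 = 0.
    by apply/matrixP=> i j; rewrite !mxE (@br0l R n br lin) mxE.
  have al := @adm_lin R n br lin.
  have half : forall v : 'cV[R]_n, 2^-1 *: (v + v) = v.
    by move=> v; rewrite -mulr2n -scaler_nat scalerA mulVf ?pnatr_eq0 // scale1r.
  split.
  + split.
    * by move=> x _.
    * split; first by rewrite /graphO /zeroO /adV0 /= adm0.
      move=> a [[A r] x] [[B s] y]; rewrite /graphO /lcO /adV0 /= => -[? ?] [? ?]; subst.
      by rewrite al scaler0 addr0.
    * split; first by rewrite /graphM /zeroM /adV1 /adV0 /= adm0.
      move=> a [[[A r] p] [x m]] [[[B s] q] [y k]].
      rewrite /graphM /lcM /adV1 /adV0 /= => -[? ? ?] [? ? ?]; subst.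
      by rewrite al !scaler0 !addr0.
    * move=> [[[A r] p] [x m]].
      rewrite /graphM /graphO /omsrc /omtgt /adV1 /adV0 /glsrc /gltgt /srcV /tgtV /deltaE /dS /=.
      move=> -[? ? ?]; subst.
      by rewrite !mul0mx !addr0.
    * move=> [[A r] x]; rewrite /graphO /graphM /omid /glid /idV /adV1 /adV0 /= => -[? ?]; subst.
      by [].
  + move=> [[A r] x]; split.
    * rewrite /graphO /adV0 /= => -[? ?]; subst; split; first exact: inE.
      split.
      -- move=> [[B s] y]; rewrite /graphO /adV0 /ompairO /actO /= => -[? ?]; subst.
         by rewrite !am (anti y x) addrN scaler0.
      -- move=> [[[B s] p] [y m]].
         rewrite /graphM /adV1 /adV0 /ompairM /omid /glid /idV /actM /half2 /addV /dS /=.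
         move=> -[? ? ?]; subst.
         by rewrite !am (anti y x) addrN !mul0mx !addr0 !scaler0.
    * move=> [_ [Hy Hf]]; rewrite /graphO /adV0 /=.
      have eA : A = adm br x.
        apply: mx_ext => y.
        have := Hy ((adm br y, 0), y) erefl; rewrite /ompairO /actO /= !am.
        move/eqP; rewrite scaler_eq0 invr_eq0 pnatr_eq0 /= addr_eq0 => /eqP ->.
        by rewrite (anti x y).
      have er : r = 0.
        have := Hf (((adm br 0, 0), 0), (0, 1)) erefl.
        rewrite /ompairM /omid /glid /idV /actM /half2 /addV /dS /= => -[_].
        rewrite !mul0mx ?mulmx0 mulmx1 !addr0 => /eqP.
        by rewrite scaler_eq0 invr_eq0 pnatr_eq0 /= => /eqP.
      by rewrite eA er.
  + move=> [[[A r] p] [x m]]; split.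
    * rewrite /graphM /adV1 /adV0 /= => -[? ? ?]; subst; split; first exact: inE.
      move=> [[[B s] q] [y k]].
      rewrite /graphM /adV1 /adV0 /ompairM /actM /half2 /addV /dS /= => -[? ? ?]; subst.
      by rewrite !am (anti y x) addrN !mul0mx ?mulmx0 !addr0 !scaler0.
    * move=> [_ Hf]; rewrite /graphM /adV1 /adV0 /=.
      have [eA ep] : A = adm br x /\ p = 0.
        split; apply: mx_ext => y;
          have := Hf (((adm br y, 0), 0), (y, 0)) erefl;
          rewrite /ompairM /actM /half2 /addV /dS /= => -[H1 H2].
          move/eqP: H1; rewrite !am scaler_eq0 invr_eq0 pnatr_eq0 /= addr_eq0 => /eqP ->.
          by rewrite (anti x y).
        move/eqP: H2; rewrite !mul0mx ?mulmx0 !addr0 scaler_eq0 invr_eq0 pnatr_eq0 /=.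
        by rewrite add0r => /eqP.
      have er : r = 0.
        have := Hf (((adm br 0, 0), 0), (0, 1)) erefl.
        rewrite /ompairM /actM /half2 /addV /dS /= => -[_].
        rewrite ep !mul0mx ?mulmx0 mulmx1 !addr0 => /eqP.
        by rewrite scaler_eq0 invr_eq0 pnatr_eq0 /= => /eqP.
      by rewrite eA ep er.
  + move=> [[A r] x] [[B s] y]; rewrite /graphO /adV0 /ombrO /glbrO /actO /=.
    move=> -[? ?] [? ?]; subst.
    by rewrite !mulmx0 subrr ac !am (anti y x) opprK half.
  + move=> [[[A r] p] [x m]] [[[B s] q] [y k]].
    rewrite /graphM /adV1 /adV0 /ombrM /glbrM /glbrO /glbrD /glbrA /actM /half2 /subV /dS /=.
    move=> -[? ? ?] [? ? ?]; subst.
    by rewrite ac !(mulmx0, mul0mx, subrr, addr0, sub0r, oppr0) !am (anti y x) opprK half.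
- by move=> u v; rewrite /actO /= am.
- move=> e f; rewrite /actM /strbrM /= am !mul0mx addr0.
  by [].
Qed.
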